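(* Let $\mathbb{X},\mathbb{Y}$ be finite-dimensional real Hilbert spaces, $f:\mathbb{X}\to(-\infty,\infty]$ and $g:\mathbb{Y}\to(-\infty,\infty]$ proper, convex and lower semicontinuous, $K:\mathbb{X}\to\mathbb{Y}$ linear, and $h:\mathbb{X}\to\mathbb{R}$ convex and differentiable with $\bar L$-Lipschitz gradient. Assume (A1) below holds and that $g^*$ is strongly convex with modulus $\gamma_{g^*}>0$ and $h$ is strongly convex with modulus $\gamma_h>0$. Let $\{(z_n,x_n,w_n,y_n,\tau_n)\}$ be generated by the P-GRPDA algorithm described in the context, and suppose $\{(x_n,y_n)\}$ converges to the unique primal-dual solution $(\bar x,\bar y)$. Then there exist constants $V_1,V_2,Z>0$, a scalar $\zeta\in(0,1)$ and a natural number $n_4$ such that for all $n\ge n_4$, $$\|\bar x-z_{n+2}\|^2\le Z\zeta^n,\qquad\|\bar y-y_n\|^2\le V_1\zeta^n,\qquad\|x_n-x_{n+1}\|^2\le V_2\zeta^n,$$ and thus $\{(x_n,y_n)\}$ converges R-linearly to $(\bar x,\bar y)$.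
   Context: $\phi=\frac{1+\sqrt5}{2}$; $K^*$ adjoint of $K$; $g^*$ Fenchel conjugate of $g$; $\operatorname{prox}_{\lambda f}(x)=\arg\min_{u}\{f(u)+\frac{1}{2\lambda}\|u-x\|^2\}$. (A1): the saddle point problem $\min_{x}\max_{y}\mathbb{L}(x,y):=f(x)+h(x)+\langle Kx,y\rangle-g^*(y)$ has a nonempty solution set, and $0\in\operatorname{ri}(K(\operatorname{dom}f)-\operatorname{dom}g)$ (ri = relative interior). (The paper also assumes the proximal maps of $f,g$ are efficiently computable.) A primal-dual solution is a saddle point $(\bar x,\bar y)$ of $\mathbb{L}$. Strong convexity: $h(y)-h(z)\ge\langle\nabla h(z),y-z\rangle+\frac{\gamma_h}{2}\|y-z\|^2$ for all $y,z$; $g^*(y)-g^*(z)\ge\langle u,y-z\rangle+\frac{\gamma_{g^*}}{2}\|y-z\|^2$ for all $y,z$ and all $u\in\partial g^*(z)$. A sequence $v_n$ converges R-linearly to $v$ if $\|v_n-v\|\le M\epsilon_n$ for all large $n$ with some $M>0$ and some sequence $\epsilon_n$ converging Q-linearly to $0$ (i.e. $|\epsilon_{n+1}|\le q|\epsilon_n|$ for large $n$, some $q\in(0,1)$). P-GRPDA: choose $x_0\in\mathbb{X}$, $y_0\in\mathbb{Y}$, set $z_0=x_0$, choose $\beta>0$, $\psi\in(1,\phi]$, $0<2\mu'<\mu<\psi/2$, $\tau_0>0$. For $n=1,2,\dots$: $z_n=\frac{\psi-1}{\psi}x_{n-1}+\frac1\psi z_{n-1}$; $x_n=\operatorname{prox}_{\tau_{n-1}f}\big(z_n-\tau_{n-1}K^*y_{n-1}-\tau_{n-1}\nabla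 h(x_{n-1})\big)$; $\tau_n=\min\left\{\tau_{n-1},\ \frac{\mu\|x_n-x_{n-1}\|}{\sqrt\beta\|Kx_n-Kx_{n-1}\|},\ \frac{\mu'\|x_n-x_{n-1}\|}{\|\nabla h(x_n)-\nabla h(x_{n-1})\|}\right\}$, $\sigma_n=\beta\tau_n$; $w_n=\operatorname{prox}_{\frac{1}{\sigma_n}g}\big(\frac{y_{n-1}}{\sigma_n}+Kx_n\big)$; $y_n=y_{n-1}+\sigma_n(Kx_n-w_n)$. Conventions in the $\tau_n$ update: $1/0=\infty$ (a term with zero denominator and nonzero numerator is ignored) and $0/0=\infty$ (so $\tau_n=\tau_{n-1}$ if $x_n=x_{n-1}$). *)

(* Defs.v *)
(* R : realType, finite-dimensional real Hilbert spaces are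
   modelled as row vectors 'rV[R]_n with the standard (Euclidean) inner product. *)
From HB Require Import structures.
From mathcomp Require Import all_boot all_order all_algebra.
From mathcomp Require Import boolp classical_sets reals constructive_ereal ereal.
Set Implicit Arguments. Unset Strict Implicit. Unset Printing Implicit Defensive.
Import Order.TTheory GRing.Theory Num.Theory.
Local Open Scope ring_scope.
Local Open Scope classical_set_scope.

Section Defs.
Variable R : realType.

Definition dotv {n : nat} (u v : 'rV[R]_n) : R := \sum_(i < n) u ord0 i * v ord0 i.
Definition enorm {n : nat} (u : 'rV[R]_n) : R := Num.sqrt (dotv u u).

Definition proper_fun {n : nat} (f : 'rV[R]_n -> \bar R) : Prop :=
  (forall x, -oo < f x)%E /\ exists x, (f x < +oo)%E.

Definition convex_efun {n : nat} (f : 'rV[R]_n -> \bar R) : Prop :=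
  forall (x y : 'rV[R]_n) (t : R), 0 < t < 1 ->
    (f (t *: x + (1 - t) *: y)%R <= t%:E * f x + (1 - t)%R%:E * f y)%E.

Definition convex_rfun {n : nat} (h : 'rV[R]_n -> R) : Prop :=
  forall (x y : 'rV[R]_n) (t : R), 0 <= t <= 1 ->
    h (t *: x + (1 - t) *: y) <= t * h x + (1 - t) * h y.

Definition lsc_efun {n : nat} (f : 'rV[R]_n -> \bar R) : Prop :=
  forall (x : 'rV[R]_n) (a : R), (a%:E < f x)%E ->
    exists2 d : R, 0 < d & forall u, enorm (u - x) < d -> (a%:E < f u)%E.

Definition is_gradient {n : nat} (h : 'rV[R]_n -> R) (gh : 'rV[R]_n -> 'rV[R]_n) : Prop :=
  forall (x : 'rV[R]_n) (eps : R), 0 < eps ->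
    exists2 d : R, 0 < d & forall v, enorm v < d ->
      `| h (x + v) - h x - dotv (gh x) v | <= eps * enorm v.

Definition fconj {n : nat} (g : 'rV[R]_n -> \bar R) (y : 'rV[R]_n) : \bar R :=
  ereal_sup [set ((dotv x y)%:E - g x)%E | x in [set: 'rV[R]_n]].

(* The subdifferential at z is empty when g z is not finite. *)
Definition subdiff {n : nat} (g : 'rV[R]_n -> \bar R) (z u : 'rV[R]_n) : Prop :=
  g z \is a fin_num /\ forall y, (g z + (dotv u (y - z)%R)%:E <= g y)%E.

Definition strongly_convex_efun {n : nat} (g : 'rV[R]_n -> \bar R) (gam : R) : Prop :=
  forall y z u, subdiff g z u ->
    (g z + (dotv u (y - z) + gam / 2 * enorm (y - z) ^+ 2)%R%:E <= g y)%E.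

Definition strongly_convex_rfun {n : nat} (h : 'rV[R]_n -> R)
  (gh : 'rV[R]_n -> 'rV[R]_n) (gam : R) : Prop :=
  forall y z, h y - h z >= dotv (gh z) (y - z) + gam / 2 * enorm (y - z) ^+ 2.

Definition is_prox {n : nat} (lam : R) (phi : 'rV[R]_n -> \bar R) (v u : 'rV[R]_n) : Prop :=
  forall u', (phi u + ((2 * lam)^-1 * enorm (u - v) ^+ 2)%R%:E
              <= phi u' + ((2 * lam)^-1 * enorm (u' - v) ^+ 2)%R%:E)%E.

Definition aff_hull {m : nat} (S : set 'rV[R]_m) : set 'rV[R]_m :=
  [set z | exists (k : nat) (p : 'I_k -> 'rV[R]_m) (c : 'I_k -> R),
     [/\ (forall i, S (p i)), \sum_(i < k) c i = 1 & z = \sum_(i < k) c i *: p i]].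

Definition rel_interior {m : nat} (S : set 'rV[R]_m) : set 'rV[R]_m :=
  [set z | S z /\ exists2 e : R, 0 < e &
     forall u, aff_hull S u -> enorm (u - z) < e -> S u].

(* the Lagrangian L(x,y) = f x + h x + <Kx, y> - g^*(y), K x := x *m K *)
Definition lagr {n m : nat} (f : 'rV[R]_n -> \bar R) (h : 'rV[R]_n -> R)
  (K : 'M[R]_(n, m)) (g : 'rV[R]_m -> \bar R) (x : 'rV[R]_n) (y : 'rV[R]_m) : \bar R :=
  (f x + (h x + dotv (x *m K) y)%R%:E - fconj g y)%E.

Definition saddle_point {n m : nat} (f : 'rV[R]_n -> \bar R) (h : 'rV[R]_n -> R)
  (K : 'M[R]_(n, m)) (g : 'rV[R]_m -> \bar R) (xb : 'rV[R]_n) (yb : 'rV[R]_m) : Prop :=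
  [/\ f xb \is a fin_num, fconj g yb \is a fin_num &
      (forall x y, (lagr f h K g xb y <= lagr f h K g xb yb <= lagr f h K g x yb)%E)].

Definition A1 {n m : nat} (f : 'rV[R]_n -> \bar R) (h : 'rV[R]_n -> R)
  (K : 'M[R]_(n, m)) (g : 'rV[R]_m -> \bar R) : Prop :=
  (exists xb yb, saddle_point f h K g xb yb) /\
  rel_interior [set (x *m K) - w | x in [set x | (f x < +oo)%E] &
                                   w in [set w | (g w < +oo)%E]] 0.

Definition qratio (a b : R) : \bar R := if b == 0 then +oo%E else (a / b)%:E.

Definition golden : R := (1 + Num.sqrt 5) / 2.

(* the P-GRPDA iteration (for n = 1,2,... written with index k.+1) *)
Definition pgrpda {n m : nat} (f : 'rV[R]_n -> \bar R) (gh : 'rV[R]_n -> 'rV[R]_n)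
  (K : 'M[R]_(n, m)) (g : 'rV[R]_m -> \bar R)
  (beta psi mu mu' : R)
  (z x : nat -> 'rV[R]_n) (w y : nat -> 'rV[R]_m) (tau : nat -> R) : Prop :=
  [/\ 0 < beta, 1 < psi <= golden, (0 < 2 * mu' < mu) && (mu < psi / 2),
      (0 < tau 0) /\ (z 0 = x 0) &
      (forall k : nat,
      [/\ z k.+1 = ((psi - 1) / psi) *: x k + psi^-1 *: z k,
          is_prox (tau k) f (z k.+1 - tau k *: (y k *m K^T) - tau k *: gh (x k)) (x k.+1),
          (tau k.+1)%:E = Order.min (tau k)%:E
             (Order.min (qratio (mu * enorm (x k.+1 - x k))
                                (Num.sqrt beta * enorm (x k.+1 *m K - x k *m K)))
                        (qratio (mu' * enorm (x k.+1 - x k))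
                                (enorm (gh (x k.+1) - gh (x k))))),
          is_prox (beta * tau k.+1)^-1 g ((beta * tau k.+1)^-1 *: y k + x k.+1 *m K) (w k.+1) &
          y k.+1 = y k + (beta * tau k.+1) *: (x k.+1 *m K - w k.+1)])].

Definition Qlinear_to0 (e : nat -> R) : Prop :=
  exists2 q : R, 0 < q < 1 & exists N : nat, forall k, (N <= k)%N -> `|e k.+1| <= q * `|e k|.

Definition Rlinear_conv {n m : nat} (x : nat -> 'rV[R]_n) (y : nat -> 'rV[R]_m)
  (xb : 'rV[R]_n) (yb : 'rV[R]_m) : Prop :=
  exists2 M : R, 0 < M & exists e : nat -> R, Qlinear_to0 e /\
    exists N : nat, forall k, (N <= k)%N ->
      Num.sqrt (enorm (x k - xb) ^+ 2 + enorm (y k - yb) ^+ 2) <= M * e k.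

End Defs.

(* Main.v *)
Require Import Defs.
From HB Require Import structures.
From mathcomp Require Import all_boot all_order all_algebra.
From mathcomp Require Import boolp classical_sets reals constructive_ereal ereal.
From mathcomp Require Import ring lra.
Import Order.TTheory GRing.Theory Num.Theory.
Local Open Scope ring_scope.

Ltac dotco := rewrite /dotv ?mulr_sumr -?sumrN -?sumrB -?big_split /=;
  apply: eq_bigr => i _; rewrite !mxE; ring.

Lemma dotvC {R : realType} {n : nat} (u v : 'rV[R]_n) : dotv u v = dotv v u.
Proof. by rewrite /dotv; apply: eq_bigr => i _; rewrite mulrC. Qed.
Lemma dotvDl {R : realType} {n : nat} (u v p : 'rV[R]_n) : dotv (u + v) p = dotv u p + dotv v p.
Proof. dotco. Qed.
Lemma dotvDr {R : realType} {n : nat} (u v p : 'rV[R]_n) : dotv p (u + v) = dotv p u + dotv p v.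
Proof. dotco. Qed.
Lemma dotvBl {R : realType} {n : nat} (u v p : 'rV[R]_n) : dotv (u - v) p = dotv u p - dotv v p.
Proof. dotco. Qed.
Lemma dotvBr {R : realType} {n : nat} (u v p : 'rV[R]_n) : dotv p (u - v) = dotv p u - dotv p v.
Proof. dotco. Qed.
Lemma dotvNl {R : realType} {n : nat} (u p : 'rV[R]_n) : dotv (- u) p = - dotv u p.
Proof. dotco. Qed.
Lemma dotvNr {R : realType} {n : nat} (u p : 'rV[R]_n) : dotv p (- u) = - dotv p u.
Proof. dotco. Qed.
Lemma dotvZl {R : realType} {n : nat} t (u p : 'rV[R]_n) : dotv (t *: u) p = t * dotv u p.
Proof. dotco. Qed.
Lemma dotvZr {R : realType} {n : nat} t (u p : 'rV[R]_n) : dotv p (t *: u) = t * dotv p u.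
Proof. dotco. Qed.
Lemma dotv_ge0 {R : realType} {n : nat} (u : 'rV[R]_n) : 0 <= dotv u u.
Proof. by rewrite /dotv; apply: sumr_ge0 => i _; rewrite -expr2 sqr_ge0. Qed.
Lemma enorm2 {R : realType} {n : nat} (u : 'rV[R]_n) : enorm u ^+ 2 = dotv u u.
Proof. by rewrite /enorm sqr_sqrtr // dotv_ge0. Qed.
Lemma enorm_ge0 {R : realType} {n : nat} (u : 'rV[R]_n) : 0 <= enorm u.
Proof. by rewrite /enorm sqrtr_ge0. Qed.
Lemma dotv_adj {R : realType} {n : nat} m (K : 'M[R]_(n, m)) (x : 'rV[R]_n) (y : 'rV[R]_m) :
  dotv (y *m K^T) x = dotv (x *m K) y.
Proof.
rewrite /dotv.
under eq_bigr do rewrite !mxE big_distrl /=.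
under [RHS]eq_bigr do rewrite !mxE big_distrl /=.
rewrite exchange_big /=; apply: eq_bigr => i _; apply: eq_bigr => j _.
by rewrite !mxE; ring.
Qed.
Lemma young {R : realType} {n : nat} (a b : 'rV[R]_n) s : 0 < s ->
  2 * dotv a b <= s * dotv a a + s^-1 * dotv b b.
Proof.
move=> s0; have := dotv_ge0 (s *: a - b).
rewrite !(dotvBl, dotvBr, dotvZl, dotvZr) (dotvC b a) => H.
rewrite -(ler_pM2l s0) mulrDr (mulrA s s^-1) mulfV ?gt_eqF // mul1r.
nra.
Qed.
Lemma youngN {R : realType} {n : nat} (a b : 'rV[R]_n) s : 0 < s ->
  - (2 * dotv a b) <= s * dotv a a + s^-1 * dotv b b.
Proof.
move=> s0; have := @young _ _ (- a) b s s0.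
by rewrite !(dotvNl, dotvNr) opprK mulrN.
Qed.
Lemma polar {R : realType} {n : nat} (a b c : 'rV[R]_n) :
  2 * dotv (a - b) (c - b) = dotv (a - b) (a - b) + dotv (c - b) (c - b) - dotv (a - c) (a - c).
Proof. rewrite !(dotvBl, dotvBr) (dotvC b a) (dotvC c a) (dotvC b c); ring. Qed.
Lemma nsq_sym {R : realType} {n : nat} (a b : 'rV[R]_n) : dotv (a - b) (a - b) = dotv (b - a) (b - a).
Proof. rewrite !(dotvBl, dotvBr) (dotvC b a); ring. Qed.
Lemma convex_comb {R : realType} {n : nat} (a1 a2 : R) (u v p : 'rV[R]_n) : a1 + a2 = 1 ->
  dotv (a1 *: u + a2 *: v - p) (a1 *: u + a2 *: v - p) =
  a1 * dotv (u - p) (u - p) + a2 * dotv (v - p) (v - p) - a1 * a2 * dotv (u - v) (u - v).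
Proof.
move=> H; have -> : a2 = 1 - a1 by rewrite -H; ring.
rewrite !(dotvBl, dotvBr, dotvDl, dotvDr, dotvZl, dotvZr) (dotvC v u) (dotvC p u) (dotvC p v).
ring.
Qed.
Lemma sum3 {R : realType} {n : nat} (a b c : 'rV[R]_n) :
  dotv (a + b + c) (a + b + c) <= 3 * (dotv a a + dotv b b + dotv c c).
Proof.
have h1 := dotv_ge0 (a - b); have h2 := dotv_ge0 (b - c); have h3 := dotv_ge0 (a - c).
move: h1 h2 h3; rewrite !(dotvBl, dotvBr, dotvDl, dotvDr) (dotvC b a) (dotvC c a) (dotvC c b).
lra.
Qed.
Lemma nsqD {R : realType} {n : nat} (a b : 'rV[R]_n) :
  dotv (a + b) (a + b) = dotv a a + 2 * dotv a b + dotv b b.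
Proof. rewrite dotvDl !dotvDr (dotvC b a); ring. Qed.
Lemma nsqZ {R : realType} {n : nat} t (a : 'rV[R]_n) :
  dotv (t *: a) (t *: a) = t ^+ 2 * dotv a a.
Proof. rewrite dotvZl dotvZr; ring. Qed.
Lemma cs_weak {R : realType} {n : nat} (x k : 'rV[R]_n) :
  dotv x k ^+ 2 <= dotv x x * (dotv k k + 1).
Proof.
set A := dotv x x; set B := dotv x k; set C := dotv k k.
have H := dotv_ge0 ((C + 1) *: x - B *: k).
rewrite !(dotvBl, dotvBr, dotvZl, dotvZr) (dotvC k x) -/A -/B -/C in H.
have C0 : 0 <= C by apply: dotv_ge0.
have A0 : 0 <= A by apply: dotv_ge0.
have H2 : B ^+ 2 * (C + 2) <= A * (C + 1) * (C + 2) by nra.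
by rewrite -(ler_pM2r (_ : 0 < C + 2)) //; lra.
Qed.

Lemma opnorm {R : realType} {n m : nat} (K : 'M[R]_(n, m)) :
  exists2 C : R, 0 < C & forall x : 'rV[R]_n, dotv (x *m K) (x *m K) <= C * dotv x x.
Proof.
pose k (j : 'I_m) : 'rV[R]_n := \row_i K i j.
exists (1 + \sum_(j < m) (dotv (k j) (k j) + 1)).
  by rewrite ltr_pwDl // sumr_ge0 // => j _; rewrite addr_ge0 // dotv_ge0.
move=> x.
have E : forall j, (x *m K) ord0 j = dotv x (k j).
  by move=> j; rewrite !mxE /dotv; apply: eq_bigr => i _; rewrite !mxE.
rewrite mulrDl mul1r; apply: ler_wpDl; first exact: dotv_ge0.
rewrite mulr_suml /dotv; apply: ler_sum => j _.
rewrite -/(dotv x x) E -expr2 mulrC; exact: cs_weak.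
Qed.
Lemma lim_t0 {R : realType} (a b c : R) : 0 <= c ->
  (forall t, 0 < t < 1 -> a <= b + t * c) -> a <= b.
Proof.
move=> c0 H; apply/ler_addgt0Pr => e e0.
have d0 : 0 < c + e + 1 by lra.
have t0 : 0 < e / (c + e + 1) by apply: divr_gt0.
have t1 : e / (c + e + 1) < 1 by rewrite ltr_pdivrMr //; lra.
have := H _ (andb_true_intro (conj t0 t1)).
have : e / (c + e + 1) * c <= e.
  rewrite mulrAC ler_pdivrMr //; nra.
lra.
Qed.

Lemma prox_fin {R : realType} {n : nat} (lam : R) (phi : 'rV[R]_n -> \bar R) v u :
  proper_fun phi -> is_prox lam phi v u -> phi u \is a fin_num.
Proof.
move=> [Hm [x0 Hx0]] Hp; apply: fin_real; rewrite Hm /=.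
move: (Hp x0) Hx0; case: (phi u) => [r| |] //=.
- by move=> _ _; rewrite ltry.
- by case: (phi x0) => [r| |] //=.
Qed.

Lemma prox_vi {R : realType} {n : nat} (lam : R) (phi : 'rV[R]_n -> \bar R) v u :
  0 < lam -> proper_fun phi -> convex_efun phi -> is_prox lam phi v u ->
  forall u', phi u' \is a fin_num ->
  dotv (v - u) (u' - u) <= lam * (fine (phi u') - fine (phi u)).
Proof.
move=> l0 Hpr Hc Hp u' Hu'.
have Hu := @prox_fin _ _ lam phi v u Hpr Hp.
set Pu := fine (phi u); set Pu' := fine (phi u').
have Eu : phi u = Pu%:E by rewrite fineK.
have Eu' : phi u' = Pu'%:E by rewrite fineK.
set N := dotv (u' - u) (u' - u).
set D := dotv (u - v) (u' - u).
have N0 : 0 <= N by apply: dotv_ge0.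
suff : - (2 * D) <= 2 * lam * (Pu' - Pu) + 0.
  have -> : dotv (v - u) (u' - u) = - D by rewrite /D -dotvNl opprB.
  rewrite addr0; lra.
apply: (@lim_t0 _ _ _ N N0) => t /andP [t0 t1].
set ut := t *: u' + (1 - t) *: u.
have Hcv := Hc u' u t (andb_true_intro (conj t0 t1)).
rewrite -/ut Eu Eu' -!EFinM -EFinD in Hcv.
have Hpt := Hp ut.
have : ((Pu + (2 * lam)^-1 * enorm (u - v) ^+ 2)%:E <=
        (t * Pu' + (1 - t) * Pu + (2 * lam)^-1 * enorm (ut - v) ^+ 2)%:E)%E.
  rewrite EFinD -Eu; apply: (le_trans Hpt).
  by rewrite EFinD; apply: leeD2r.
rewrite lee_fin !enorm2.
have -> : dotv (ut - v) (ut - v) = dotv (u - v) (u - v) + 2 * t * D + t ^+ 2 * N.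
  have -> : ut - v = (u - v) + t *: (u' - u).
    by rewrite /ut; apply/rowP => i; rewrite !mxE; ring.
  by rewrite nsqD nsqZ dotvZr -/D -/N mulrA.
move=> H.
have H2 : 2 * lam * t * Pu <= 2 * lam * t * Pu' + 2 * t * D + t * t * N.
  have l2 : 0 < 2 * lam by lra.
  have : 2 * lam * (Pu + (2 * lam)^-1 * dotv (u - v) (u - v)) <=
         2 * lam * (t * Pu' + (1 - t) * Pu + (2 * lam)^-1 * (dotv (u - v) (u - v) + 2 * t * D + t ^+ 2 * N)).
    by rewrite ler_pM2l.
  rewrite !mulrDr !mulrA mulfV ?gt_eqF // !mul1r; nra.
have : t * (2 * lam * Pu) <= t * (2 * lam * Pu' + 2 * D + t * N) by nra.
rewrite ler_pM2l //; lra.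
Qed.
Lemma fconj_ge {R : realType} {n : nat} (g : 'rV[R]_n -> \bar R) (w y : 'rV[R]_n) :
  g w \is a fin_num -> ((dotv w y - fine (g w))%:E <= fconj g y)%E.
Proof.
move=> Hw; rewrite /fconj; apply: ereal_sup_ubound => /=.
by exists w => //; rewrite EFinB fineK.
Qed.

Lemma conj_subdiff {R : realType} {n : nat} (g : 'rV[R]_n -> \bar R) (w y : 'rV[R]_n) :
  proper_fun g -> g w \is a fin_num ->
  (forall w', g w' \is a fin_num -> dotv y (w' - w) <= fine (g w') - fine (g w)) ->
  fconj g y = (dotv w y - fine (g w))%:E /\ subdiff (fconj g) y w.
Proof.
move=> [Hm _] Hw Hsub.
have E : fconj g y = (dotv w y - fine (g w))%:E.
  apply/eqP; rewrite eq_le fconj_ge // andbT.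
  rewrite /fconj; apply: ge_ereal_sup => e [x _ <-].
  have := Hm x; case Ex: (g x) => [r| |] //= _.
  - have := Hsub x; rewrite Ex => /(_ isT) /=.
    rewrite dotvBr (dotvC y x) (dotvC y w) -EFinB lee_fin; lra.
  - by rewrite leNye.
split=> //; split; first by rewrite E.
move=> y'; rewrite E -EFinD.
have -> : dotv w y - fine (g w) + dotv w (y' - y) = dotv w y' - fine (g w).
  rewrite dotvBr; ring.
exact: fconj_ge.
Qed.
Lemma dual_step {R : realType} {m : nat} (g : 'rV[R]_m -> \bar R) (sig gam : R)
  (y0 y1 w p yb : 'rV[R]_m) :
  0 < sig -> proper_fun g -> convex_efun g ->
  is_prox sig^-1 g (sig^-1 *: y0 + p) w -> y1 = y0 + sig *: (p - w) ->
  strongly_convex_efun (fconj g) gam -> fconj g yb \is a fin_num ->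
  fconj g y1 \is a fin_num /\
  sig * fine (fconj g y1) + sig * dotv p (yb - y1) + dotv (y0 - y1) (yb - y1)
    + sig * (gam / 2 * enorm (yb - y1) ^+ 2) <= sig * fine (fconj g yb).
Proof.
move=> s0 Hpr Hc Hp Hy Hsc Hb.
have si0 : 0 < sig^-1 by rewrite invr_gt0.
have Hw := @prox_fin _ _ _ g _ w Hpr Hp.
have Hvi := @prox_vi _ _ _ g _ w si0 Hpr Hc Hp.
have Hsub : forall w', g w' \is a fin_num ->
    dotv y1 (w' - w) <= fine (g w') - fine (g w).
  move=> w' Hw'; have := Hvi w' Hw'.
  have -> : sig^-1 *: y0 + p - w = sig^-1 *: y1.
    by rewrite Hy; apply/rowP => i; rewrite !mxE; field; rewrite gt_eqF.
  by rewrite dotvZl -(ler_pM2l s0) !mulrA mulfV ?gt_eqF // !mul1r.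
have [E Hsd] := @conj_subdiff _ _ g w y1 Hpr Hw Hsub.
split; first by rewrite E.
have := Hsc yb y1 w Hsd.
rewrite -(fineK Hb) -(fineK (_ : fconj g y1 \is a fin_num)); last by rewrite E.
rewrite -EFinD lee_fin => H.
have Hsw : sig *: w = sig *: p + y0 - y1.
  by rewrite Hy; apply/rowP => i; rewrite !mxE; ring.
have : sig * (fine (fconj g y1) + (dotv w (yb - y1) + gam / 2 * enorm (yb - y1) ^+ 2))
   <= sig * fine (fconj g yb) by rewrite ler_pM2l.
have Hd : sig * dotv w (yb - y1) = sig * dotv p (yb - y1) + dotv (y0 - y1) (yb - y1).
  by rewrite -dotvZl Hsw -addrA (dotvDl (sig *: p) (y0 - y1)) dotvZl.
rewrite !mulrDr Hd; lra.
Qed.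
Lemma saddle_x {R : realType} {n m : nat} (f : 'rV[R]_n -> \bar R) (h : 'rV[R]_n -> R)
  (K : 'M[R]_(n, m)) (g : 'rV[R]_m -> \bar R) xb yb :
  saddle_point f h K g xb yb -> forall x, f x \is a fin_num ->
  fine (f xb) + h xb + dotv (xb *m K) yb <= fine (f x) + h x + dotv (x *m K) yb.
Proof.
move=> [Hf Hg Hs] x Hx; have /andP [_ H] := Hs x yb.
move: H; rewrite /lagr -(fineK Hf) -(fineK Hx) -(fineK Hg) /=.
rewrite -!EFinD lee_fin.
lra.
Qed.

Lemma saddle_y {R : realType} {n m : nat} (f : 'rV[R]_n -> \bar R) (h : 'rV[R]_n -> R)
  (K : 'M[R]_(n, m)) (g : 'rV[R]_m -> \bar R) xb yb :
  saddle_point f h K g xb yb -> forall y, fconj g y \is a fin_num ->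
  fine (fconj g yb) - dotv (xb *m K) yb <= fine (fconj g y) - dotv (xb *m K) y.
Proof.
move=> [Hf Hg Hs] y Hy; have /andP [H _] := Hs xb y.
move: H; rewrite /lagr -(fineK Hf) -(fineK Hy) -(fineK Hg) /=.
rewrite -!EFinD lee_fin.
lra.
Qed.
Lemma bernoulli_le {R : realType} (e : R) (i : nat) : 0 <= e -> 1 + i%:R * e <= (1 + e) ^+ i.
Proof.
move=> e0; elim: i => [|i IH]; first by rewrite mul0r addr0 expr0.
rewrite exprS -natr1 mulrDl mul1r.
have : 0 <= (1 + e) ^+ i by apply: exprn_ge0; lra.
have : 0 <= i%:R :> R by apply: ler0n.
move=> h1 h2.
have : 0 <= e * ((1 + e) ^+ i - 1 - i%:R * e) by apply: mulr_ge0 => //; lra.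
have : 0 <= e * (i%:R * e) by apply: mulr_ge0 => //; apply: mulr_ge0.
nra.
Qed.

Lemma mono_le {R : realType} (t : nat -> R) : (forall k, t k.+1 <= t k) ->
  forall N k, (N <= k)%N -> t k <= t N.
Proof.
move=> Ht N k /subnKC <-; elim: (k - N)%N => [|j IH]; first by rewrite addn0.
by rewrite addnS; apply: le_trans (Ht _) IH.
Qed.

Lemma ratio_ev {R : realType} (t : nat -> R) (tmin eps : R) :
  0 < tmin -> 0 < eps -> (forall k, tmin <= t k) -> (forall k, t k.+1 <= t k) ->
  exists N, forall k, (N <= k)%N -> t k <= (1 + eps) * t k.+1.
Proof.
move=> tm0 e0 Hlb Hmo; apply: contrapT => H.
have H' : forall N, exists k, (N <= k)%N /\ (1 + eps) * t k.+1 < t k.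
  move=> N; apply: contrapT => Hn; apply: H; exists N => k Nk.
  rewrite leNgt; apply/negP => Hlt; apply: Hn; by exists k.
have Hi : forall i : nat, exists N, (1 + eps) ^+ i * t N <= t 0%N.
  elim=> [|i [N HN]]; first by exists 0%N; rewrite expr0 mul1r.
  have [k [Nk Hk]] := H' N.
  exists k.+1; rewrite exprSr -mulrA; apply: le_trans HN.
  rewrite ler_pM2l; last by apply: exprn_gt0; lra.
  exact: le_trans (ltW Hk) (@mono_le _ t Hmo N k Nk).
have b0 : 0 <= t 0%N / (tmin * eps) by apply: divr_ge0; [apply: le_trans (Hlb 0%N); lra | nra].
have := archi_boundP b0; set i := Num.Def.archi_bound _.
move=> Hb.
have [N HN] := Hi i.
have := @bernoulli_le _ eps i (ltW e0).
have := Hlb N.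
have : t 0%N < i%:R * (tmin * eps).
  by rewrite -ltr_pdivrMr //; nra.
have : 0 <= (1 + eps) ^+ i by apply: exprn_ge0; lra.
nra.
Qed.
Lemma qratio_sq {R : realType} (t a b : R) : 0 <= t -> 0 <= a -> 0 <= b ->
  (t%:E <= qratio a b)%E -> t ^+ 2 * b ^+ 2 <= a ^+ 2.
Proof.
move=> t0 a0 b0; rewrite /qratio; case: eqP => [->|/eqP bn0].
  by rewrite expr0n mulr0 sqr_ge0.
rewrite lee_fin => H.
have bp : 0 < b by rewrite lt_def bn0.
have : t * b <= a by rewrite -ler_pdivlMr.
move=> H2; rewrite -exprMn; apply: lerXn2r => //; rewrite ?nnegrE //; exact: mulr_ge0.
Qed.

Lemma qratio_ge {R : realType} (c d e b : R) : 0 < c -> 0 < d -> 0 <= b -> b <= d * e ->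
  ((c / d)%:E <= qratio (c * e) b)%E.
Proof.
move=> c0 d0 b0 H; rewrite /qratio; case: eqP => [_|/eqP bn0]; first by rewrite leey.
have bp : 0 < b by rewrite lt_def bn0.
rewrite lee_fin ler_pdivlMr // mulrAC ler_pdivrMr //.
by rewrite -mulrA ler_pM2l // mulrC.
Qed.

Lemma dot3 {R : realType} {n : nat} (a b c p : 'rV[R]_n) :
  dotv (a - b - c) p = dotv a p - dotv b p - dotv c p.
Proof. by rewrite !dotvBl. Qed.

Lemma bilin4 {R : realType} {n : nat} (a b c d : 'rV[R]_n) :
  dotv (a - b) (c - d) = dotv a c - dotv a d - dotv b c + dotv b d.
Proof. rewrite !(dotvBl, dotvBr); ring. Qed.

Lemma main_step {R : realType} {n m : nat}
  (f : 'rV[R]_n -> \bar R) (g : 'rV[R]_m -> \bar R) (K : 'M[R]_(n, m))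
  (h : 'rV[R]_n -> R) (gh : 'rV[R]_n -> 'rV[R]_n) (gam_g gam_h : R)
  (beta psi mu mu' eps dl : R) (xb xm x0 x1 z0 z1 z2 : 'rV[R]_n)
  (yb ym y0 w0 : 'rV[R]_m) (taum tau0 taup : R) :
  proper_fun f -> convex_efun f -> proper_fun g -> convex_efun g ->
  strongly_convex_efun (fconj g) gam_g -> strongly_convex_rfun h gh gam_h ->
  saddle_point f h K g xb yb ->
  0 < beta -> 1 < psi -> psi ^+ 2 <= psi + 1 -> 0 < mu' ->
  0 < taum -> 0 < tau0 -> 0 < taup -> tau0 <= taum ->
  taum <= (1 + eps) * tau0 -> tau0 <= (1 + eps) * taup ->
  0 <= eps -> eps <= 1 / 2 ->
  dl <= psi * (1 - eps) - (1 + eps) ^+ 2 * mu ^+ 2 - 2 * mu' ->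
  z1 = ((psi - 1) / psi) *: x0 + psi^-1 *: z0 ->
  z2 = ((psi - 1) / psi) *: x1 + psi^-1 *: z1 ->
  is_prox taum f (z0 - taum *: (ym *m K^T) - taum *: gh xm) x0 ->
  is_prox tau0 f (z1 - tau0 *: (y0 *m K^T) - tau0 *: gh x0) x1 ->
  is_prox (beta * tau0)^-1 g ((beta * tau0)^-1 *: ym + x0 *m K) w0 ->
  y0 = ym + (beta * tau0) *: (x0 *m K - w0) ->
  tau0 ^+ 2 * dotv (gh x0 - gh xm) (gh x0 - gh xm) <= mu' ^+ 2 * dotv (x0 - xm) (x0 - xm) ->
  taup ^+ 2 * beta * dotv (x1 *m K - x0 *m K) (x1 *m K - x0 *m K)
     <= mu ^+ 2 * dotv (x1 - x0) (x1 - x0) ->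
  psi / (psi - 1) * dotv (z2 - xb) (z2 - xb) + beta^-1 * dotv (y0 - yb) (y0 - yb)
    + mu' * dotv (x1 - x0) (x1 - x0)
    + dl * dotv (x1 - x0) (x1 - x0) + psi / 2 * dotv (z1 - x0) (z1 - x0)
    + tau0 * gam_g * dotv (y0 - yb) (y0 - yb) + tau0 * gam_h * dotv (x0 - xb) (x0 - xb)
  <= psi / (psi - 1) * dotv (z1 - xb) (z1 - xb) + beta^-1 * dotv (ym - yb) (ym - yb)
    + mu' * dotv (x0 - xm) (x0 - xm).
Proof.
move=> Hfp Hfc Hgp Hgc Hgsc Hhsc Hsad b0 ps1 Hgold m'0 tm0 t00 tp0 Hmon Hr1 Hr2 e0 e1 Hdl
  Hz1 Hz2 HpB HpA Hpd Hy0 Hsq2 Hsq1.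
have ps0 : 0 < psi := lt_trans ltr01 ps1.
have t0' : 0 <= tau0 := ltW t00.
have eps1 : 0 <= 1 + eps by clear -e0; lra.
have Fx0 := @prox_fin _ _ _ f _ x0 Hfp HpB.
have Fx1 := @prox_fin _ _ _ f _ x1 Hfp HpA.
have [Fxb Gyb _] := Hsad.
have HA := @prox_vi _ _ _ f _ x1 t00 Hfp Hfc HpA xb Fxb.
have HB := @prox_vi _ _ _ f _ x0 tm0 Hfp Hfc HpB x1 Fx1.
have bt0 : 0 < beta * tau0 by apply: mulr_gt0.
have [Gy0 HD] := @dual_step _ _ g (beta * tau0) gam_g ym y0 w0 (x0 *m K) yb bt0 Hgp Hgc Hpd Hy0 Hgsc Gyb.
have S1 := @saddle_x _ _ _ f h K g xb yb Hsad x0 Fx0.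
have S2 := @saddle_y _ _ _ f h K g xb yb Hsad y0 Gy0.
have Hh := Hhsc xb x0.
have EA : z1 - tau0 *: (y0 *m K^T) - tau0 *: gh x0 - x1
   = (z1 - x1) - tau0 *: (y0 *m K^T) - tau0 *: gh x0.
  by apply/rowP => i; rewrite !mxE; ring.
rewrite EA dot3 !dotvZl dotv_adj mulmxBl (dotvBl (xb *m K) (x1 *m K) y0)
  (dotvBr xb x1 (gh x0)) in HA.
have EB : z0 - taum *: (ym *m K^T) - taum *: gh xm - x0
   = psi *: (z1 - x0) - taum *: (ym *m K^T) - taum *: gh xm.
  by rewrite Hz1; apply/rowP => i; rewrite !mxE; field; rewrite gt_eqF.
rewrite EB dot3 !dotvZl dotv_adj mulmxBl (dotvBl (x1 *m K) (x0 *m K) ym)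
  (dotvBr x1 x0 (gh xm)) in HB.
rewrite (dotvBr yb y0 (x0 *m K)) enorm2 -nsq_sym in HD.
rewrite enorm2 (dotvBr xb x0 (gh x0)) -nsq_sym in Hh.
set r := tau0 / taum.
have r0 : 0 <= r by apply: divr_ge0; apply: ltW.
have rt : r * taum = tau0 by rewrite /r divfK // gt_eqF.
have HB' : r * psi * dotv (z1 - x0) (x1 - x0)
    - tau0 * (dotv (x1 *m K) ym - dotv (x0 *m K) ym)
    - tau0 * (dotv (gh xm) x1 - dotv (gh xm) x0) <= tau0 * (fine (f x1) - fine (f x0)).
  rewrite -rt; have HBr := ler_wpM2l r0 HB; clear -HBr; lra.
have bi0 : 0 <= beta^-1 by rewrite invr_ge0 ltW.
have := ler_wpM2l bi0 HD; rewrite !mulrDr !mulrA mulVf ?gt_eqF // !mul1r => HD'.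
have := ler_wpM2l t0' S1; rewrite !mulrDr => S1'.
have := ler_wpM2l t0' S2; rewrite !mulrDr => S2'.
have := ler_wpM2l t0' Hh; rewrite !mulrDr => Hh'.
have Comb : dotv (z1 - x1) (xb - x1) + r * psi * dotv (z1 - x0) (x1 - x0)
   + beta^-1 * dotv (ym - y0) (yb - y0) + tau0 * (gam_g / 2) * dotv (y0 - yb) (y0 - yb)
   + tau0 * (gam_h / 2) * dotv (x0 - xb) (x0 - xb)
   + tau0 * (dotv (x1 *m K) y0 - dotv (x1 *m K) ym - dotv (x0 *m K) y0 + dotv (x0 *m K) ym)
   + tau0 * (dotv (gh x0) x1 - dotv (gh x0) x0 - dotv (gh xm) x1 + dotv (gh xm) x0) <= 0.
  clear -HA HB' HD' S1' S2' Hh'; lra.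
rewrite -bilin4 -bilin4 in Comb.
have YK := @youngN _ _ (x1 *m K - x0 *m K) (y0 - ym) (beta * tau0) bt0.
have := ler_wpM2l t0' YK.
have e1' : tau0 * (beta * tau0)^-1 = beta^-1.
  by rewrite invfM mulrCA mulfV ?gt_eqF // mulr1.
rewrite mulrDr (mulrA tau0 (beta * tau0)^-1) e1' => YK1.
have Htt : tau0 ^+ 2 <= (1 + eps) ^+ 2 * taup ^+ 2.
  have a1 : 0 <= (1 + eps) * taup by apply: mulr_ge0 => //; apply: ltW.
  rewrite -exprMn; apply: lerXn2r; rewrite ?nnegrE //.
have KD0 := dotv_ge0 (x1 *m K - x0 *m K).
have YK2 : - (2 * tau0 * dotv (x1 *m K - x0 *m K) (y0 - ym)) <=
    (1 + eps) ^+ 2 * mu ^+ 2 * dotv (x1 - x0) (x1 - x0) + beta^-1 * dotv (y0 - ym) (y0 - ym).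
  have bKD : 0 <= beta * dotv (x1 *m K - x0 *m K) (x1 *m K - x0 *m K) by apply: mulr_ge0 => //; apply: ltW.
  have h1 := ler_wpM2r bKD Htt.
  have h2 : 0 <= (1 + eps) ^+ 2 by apply: sqr_ge0.
  have h3 := ler_wpM2l h2 Hsq1.
  have e3 : tau0 * (beta * tau0 * dotv (x1 *m K - x0 *m K) (x1 *m K - x0 *m K))
     = tau0 ^+ 2 * (beta * dotv (x1 *m K - x0 *m K) (x1 *m K - x0 *m K)) by ring.
  have e4 : (1 + eps) ^+ 2 * taup ^+ 2 * (beta * dotv (x1 *m K - x0 *m K) (x1 *m K - x0 *m K))
     = (1 + eps) ^+ 2 * (taup ^+ 2 * beta * dotv (x1 *m K - x0 *m K) (x1 *m K - x0 *m K)) by ring.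
  rewrite e3 in YK1; rewrite e4 in h1.
  set KD := dotv (x1 *m K - x0 *m K) (x1 *m K - x0 *m K) in YK1 h1 h3.
  set A := (1 + eps) ^+ 2 in h1 h3 *.
  clear -YK1 h1 h3; lra.
have tm'0 : 0 < tau0 / mu' by apply: divr_gt0.
have YH := @youngN _ _ (gh x0 - gh xm) (x1 - x0) (tau0 / mu') tm'0.
have := ler_wpM2l t0' YH.
have e2' : tau0 * (tau0 / mu')^-1 = mu'.
  by rewrite invf_div mulrCA mulfV ?gt_eqF // mulr1.
rewrite mulrDr (mulrA tau0 (tau0 / mu')^-1) e2' => YH1.
have YH2 : - (2 * tau0 * dotv (gh x0 - gh xm) (x1 - x0)) <=
    mu' * dotv (x0 - xm) (x0 - xm) + mu' * dotv (x1 - x0) (x1 - x0).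
  have mi0 : 0 <= mu'^-1 by rewrite invr_ge0 ltW.
  have := ler_wpM2l mi0 Hsq2.
  have -> : mu'^-1 * (mu' ^+ 2 * dotv (x0 - xm) (x0 - xm)) = mu' * dotv (x0 - xm) (x0 - xm).
    by rewrite mulrA expr2 mulrA mulVf ?gt_eqF // mul1r.
  have E4 : tau0 * (tau0 / mu' * dotv (gh x0 - gh xm) (gh x0 - gh xm))
     = mu'^-1 * (tau0 ^+ 2 * dotv (gh x0 - gh xm) (gh x0 - gh xm)).
    by rewrite expr2; field; rewrite gt_eqF.
  rewrite E4 in YH1; clear -YH1 E4 YH1; lra.
have P1 := polar z1 x1 xb.
have P2 := polar z1 x0 x1.
have P3 := polar ym y0 yb.
rewrite (nsq_sym ym y0) (nsq_sym yb y0) in P3.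
have HZ : psi / (psi - 1) * dotv (z2 - xb) (z2 - xb) = dotv (xb - x1) (xb - x1)
    + (psi / (psi - 1) - 1) * dotv (z1 - xb) (z1 - xb) - psi^-1 * dotv (z1 - x1) (z1 - x1).
  rewrite Hz2 convex_comb; last by field; rewrite gt_eqF.
  rewrite (nsq_sym x1 xb) (nsq_sym x1 z1).
  by field; rewrite gt_eqF // subr_eq0 gt_eqF.
have r1 : r <= 1 by rewrite /r ler_pdivrMr // mul1r.
have r2 : 1 - eps <= r.
  rewrite /r ler_pdivlMr //.
  have h1 : 0 <= 1 - eps by clear -e1; lra.
  have h2 := ler_wpM2l h1 Hr1.
  have h3 : 0 <= eps * eps * tau0 by apply: mulr_ge0 => //; apply: mulr_ge0.
  clear -h2 h3; lra.
have Q0 := dotv_ge0 (z1 - x1).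
have W0 := dotv_ge0 (z1 - x0).
have D10 := dotv_ge0 (x1 - x0).
have ps0' : 0 <= psi := ltW ps0.
have F1 : 0 <= (1 + psi^-1 - r * psi) * dotv (z1 - x1) (z1 - x1).
  apply: mulr_ge0 => //.
  have h1 : psi <= 1 + psi^-1.
    rewrite -(ler_pM2l ps0) mulrDr mulfV ?gt_eqF // mulr1 -expr2.
    by clear -Hgold; lra.
  have h2 := ler_wpM2r ps0' r1.
  clear -h1 h2; lra.
have F2 : 0 <= (r * psi - psi / 2) * dotv (z1 - x0) (z1 - x0).
  apply: mulr_ge0 => //.
  have h1 : 1 / 2 <= r by clear -r2 e1; lra.
  have h2 := ler_wpM2r ps0' h1.
  clear -h2; lra.
have F3 : 0 <= (r * psi - psi * (1 - eps)) * dotv (x1 - x0) (x1 - x0).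
  apply: mulr_ge0 => //.
  have h2 := ler_wpM2r ps0' r2.
  clear -h2; lra.
have F4 : 0 <= (psi * (1 - eps) - (1 + eps) ^+ 2 * mu ^+ 2 - 2 * mu' - dl) * dotv (x1 - x0) (x1 - x0).
  by apply: mulr_ge0 => //; clear -Hdl; lra.
have P2' : r * psi * (2 * dotv (z1 - x0) (x1 - x0)) = r * psi * (dotv (z1 - x0) (z1 - x0)
   + dotv (x1 - x0) (x1 - x0) - dotv (z1 - x1) (z1 - x1)) by rewrite P2.
have P3' : beta^-1 * (2 * dotv (ym - y0) (yb - y0)) = beta^-1 * (dotv (y0 - ym) (y0 - ym)
   + dotv (y0 - yb) (y0 - yb) - dotv (ym - yb) (ym - yb)) by rewrite P3.
clear -Comb P1 P2' P3' HZ YK2 YH2 F1 F2 F3 F4.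
lra.
Qed.

Lemma golden_sq {R : realType} (psi : R) : 1 < psi -> psi <= golden R -> psi ^+ 2 <= psi + 1.
Proof.
rewrite /golden => p1 pg.
have s5 : Num.sqrt (5 : R) ^+ 2 = 5 by rewrite sqr_sqrtr.
have s0 : 0 <= Num.sqrt (5 : R) by apply: sqrtr_ge0.
have h : 2 * psi - 1 <= Num.sqrt 5 by move: pg; rewrite ler_pdivlMr //; lra.
have h0 : 0 <= 2 * psi - 1 by lra.
have : (2 * psi - 1) ^+ 2 <= Num.sqrt 5 ^+ 2 by apply: lerXn2r; rewrite ?nnegrE.
rewrite s5; nra.
Qed.

Lemma eps_choice {R : realType} (psi mu mu' : R) : 1 < psi -> psi ^+ 2 <= psi + 1 ->
  0 < 2 * mu' -> 2 * mu' < mu -> mu < psi / 2 ->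
  exists eps dl, [/\ 0 < eps, eps <= 1 / 2, 0 < dl &
     dl <= psi * (1 - eps) - (1 + eps) ^+ 2 * mu ^+ 2 - 2 * mu'].
Proof.
move=> p1 pg m1 m2 m3.
set dt := psi - mu ^+ 2 - 2 * mu'.
have mu0 : 0 < mu by lra.
have hmu : mu ^+ 2 < psi ^+ 2 / 4.
  have : mu ^+ 2 < (psi / 2) ^+ 2 by rewrite ltrXn2r // ?nnegrE; lra.
  by rewrite expr_div_n; lra.
have dt0 : 0 < dt by rewrite /dt; lra.
set D := psi + 3 * mu ^+ 2.
have D0 : 0 < D by rewrite /D; nra.
exists (dt / (2 * D)), (dt / 2); split.
- by apply: divr_gt0 => //; lra.
- rewrite ler_pdivrMr; last lra.
  rewrite /dt /D; nra.
- lra.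
- set e := dt / (2 * D).
  have eD : e * D = dt / 2 by rewrite /e; field; rewrite gt_eqF.
  have e1 : e <= 1 by rewrite /e ler_pdivrMr; [rewrite /dt /D; nra | lra].
  have e0 : 0 <= e by apply: divr_ge0; lra.
  have h1 : e * e * mu ^+ 2 <= e * mu ^+ 2.
    by apply: ler_wpM2r; [apply: sqr_ge0 | nra].
  move: eD; rewrite /D /dt => eD.
  rewrite /dt; nra.
Qed.

Lemma contract_step {R : realType} (ia bi mu' dl ps tau tmin gg gh c m0 : R)
  (Z2 Y0 D1 W X0 E0 : R) :
  0 <= Z2 -> 0 <= Y0 -> 0 <= D1 -> 0 <= W -> 0 <= X0 -> 0 <= ia -> 0 <= c -> 0 <= bi -> 0 <= mu' ->
  c * (3 * ia + mu') <= m0 -> c * bi <= tmin * gg -> m0 <= dl -> m0 <= ps / 2 ->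
  m0 <= tmin * gh -> tmin <= tau -> 0 < gg -> 0 < gh ->
  Z2 <= 3 * (D1 + X0 + W) ->
  ia * Z2 + bi * Y0 + mu' * D1 + dl * D1 + ps / 2 * W + tau * gg * Y0 + tau * gh * X0 <= E0 ->
  (1 + c) * (ia * Z2 + bi * Y0 + mu' * D1) <= E0.
Proof.
move=> Z0 Y00 D10 W0 X00 ia0 c0 bi0 mu0 h1 h2 h3 h4 h5 h6 gg0 gh0 hZ H.
have p1 : c * ia * Z2 <= c * ia * (3 * (D1 + X0 + W)) by apply: ler_wpM2l => //; apply: mulr_ge0.
have S0 : 0 <= D1 + X0 + W by lra.
have p2 := ler_wpM2r S0 h1.
have p3 := ler_wpM2r Y00 h2.
have p4 := ler_wpM2r D10 h3.
have p5 := ler_wpM2r W0 h4.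
have p6 := ler_wpM2r X00 h5.
have gh0' : 0 <= gh := ltW gh0.
have gg0' : 0 <= gg := ltW gg0.
have p7 : tmin * gh * X0 <= tau * gh * X0 by apply: ler_wpM2r => //; apply: ler_wpM2r.
have p8 : tmin * gg * Y0 <= tau * gg * Y0 by apply: ler_wpM2r => //; apply: ler_wpM2r.
have p9 : 0 <= c * mu' * (X0 + W) by apply: mulr_ge0; [apply: mulr_ge0|lra].
lra.
Qed.

Lemma min3_le {R : realType} (a b c d : \bar R) :
  a = Order.min b (Order.min c d) -> [/\ (a <= b)%E, (a <= c)%E & (a <= d)%E].
Proof. by move=> ->; rewrite !ge_min !lexx !orbT. Qed.

Lemma enormK_le {R : realType} {n m : nat} (K : 'M[R]_(n, m)) (C : R) (u : 'rV[R]_n) :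
  0 <= C -> (forall x : 'rV[R]_n, dotv (x *m K) (x *m K) <= C * dotv x x) ->
  enorm (u *m K) <= Num.sqrt C * enorm u.
Proof.
move=> C0 H; rewrite /enorm -sqrtrM // ler_sqrt; first exact: H.
by apply: mulr_ge0 => //; apply: dotv_ge0.
Qed.

Lemma geo_decay {R : realType} (En : nat -> R) (th : R) (N : nat) : 0 < th ->
  (forall j, (N <= j)%N -> En j.+1 <= th * En j) ->
  forall j, (N <= j)%N -> En j <= (En N / th ^+ N) * th ^+ j.
Proof.
move=> t0 H j /subnKC <-; elim: (j - N)%N => [|d IH].
  by rewrite addn0 divfK // expf_neq0 // gt_eqF.
rewrite addnS; apply: le_trans (H _ (leq_addr _ _)) _.
rewrite exprS mulrCA; apply: ler_wpM2l => //; exact: ltW.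
Qed.

Lemma z_bound {R : realType} {n : nat} (psi : R) (x1 x0 z1 z2 xb : 'rV[R]_n) : 1 < psi ->
  z2 = ((psi - 1) / psi) *: x1 + psi^-1 *: z1 ->
  dotv (z2 - xb) (z2 - xb) <= 3 * (dotv (x1 - x0) (x1 - x0) + dotv (x0 - xb) (x0 - xb)
     + dotv (z1 - x0) (z1 - x0)).
Proof.
move=> p1 Hz.
have p0 : 0 < psi by apply: lt_trans p1.
have -> : z2 - xb = ((psi - 1) / psi) *: (x1 - x0) + (x0 - xb) + psi^-1 *: (z1 - x0).
  by rewrite Hz; apply/rowP => i; rewrite !mxE; field; rewrite gt_eqF.
apply: le_trans (sum3 _ _ _) _.
rewrite !nsqZ ler_pM2l //.
have a1 : ((psi - 1) / psi) ^+ 2 <= 1.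
  rewrite expr_le1 //; first by rewrite ler_pdivrMr // mul1r; lra.
  by apply: divr_ge0; lra.
have a2 : psi^-1 ^+ 2 <= 1.
  rewrite expr_le1 //; first by rewrite invf_le1 // ltW.
  by rewrite invr_ge0 ltW.
have h1 := ler_wpM2r (dotv_ge0 (x1 - x0)) a1.
have h2 := ler_wpM2r (dotv_ge0 (z1 - x0)) a2.
rewrite !mul1r in h1 h2.
lra.
Qed.

Lemma bound_term {R : realType} (p q E A th : R) : 0 < p -> 0 <= A -> 0 <= th ->
  p * q <= E -> E <= A * th -> q <= (p^-1 * A + 1) * th.
Proof.
move=> p0 A0 t0 h1 h2.
have : q <= p^-1 * E.
  by rewrite -(ler_pM2l p0) mulrA mulfV ?gt_eqF // mul1r.
move=> h3; apply: le_trans h3 _.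
have pi0 : 0 <= p^-1 by rewrite invr_ge0 ltW.
have h4 := ler_wpM2l pi0 h2.
apply: le_trans h4 _; rewrite mulrA mulrDl mul1r lerDl //.
Qed.

Theorem theorem4p2 (R : realType) (n m : nat)
  (f : 'rV[R]_n -> \bar R) (g : 'rV[R]_m -> \bar R) (K : 'M[R]_(n, m))
  (h : 'rV[R]_n -> R) (gh : 'rV[R]_n -> 'rV[R]_n) (Lbar gam_g gam_h : R)
  (beta psi mu mu' : R)
  (z x : nat -> 'rV[R]_n) (w y : nat -> 'rV[R]_m) (tau : nat -> R)
  (xb : 'rV[R]_n) (yb : 'rV[R]_m) :
  proper_fun f -> convex_efun f -> lsc_efun f ->
  proper_fun g -> convex_efun g -> lsc_efun g ->
  convex_rfun h -> is_gradient h gh ->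
  (forall u v, enorm (gh u - gh v) <= Lbar * enorm (u - v)) ->
  A1 f h K g ->
  0 < gam_g -> strongly_convex_efun (fconj g) gam_g ->
  0 < gam_h -> strongly_convex_rfun h gh gam_h ->
  pgrpda f gh K g beta psi mu mu' z x w y tau ->
  saddle_point f h K g xb yb ->
  (forall eps : R, 0 < eps -> exists N : nat, forall k, (N <= k)%N ->
      enorm (x k - xb) < eps /\ enorm (y k - yb) < eps) ->
  (exists (V1 V2 Z zeta : R) (n4 : nat),
     [/\ 0 < V1, 0 < V2, 0 < Z, 0 < zeta < 1 &
         forall k, (n4 <= k)%N ->
           [/\ enorm (xb - z k.+2) ^+ 2 <= Z * zeta ^+ k,
               enorm (yb - y k) ^+ 2 <= V1 * zeta ^+ k &
               enorm (x k - x k.+1) ^+ 2 <= V2 * zeta ^+ k]])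
  /\ Rlinear_conv x y xb yb.
Proof.
move=> Hfp Hfc _ Hgp Hgc _ _ _ Hlip _ gg0 Hgsc gh0 Hhsc Hpg Hsad _.
case: Hpg => b0 /andP[ps1 psg] /andP[/andP[m'0 m'm] mps] [t0 _] Hit.
have mu'0 : 0 < mu' by clear -m'0; lra.
have mu0 : 0 < mu by clear -m'0 m'm; lra.
have Hgold := @golden_sq _ psi ps1 psg.
have [eps [dl [e0 e1 dl0 Hdl]]] := @eps_choice _ psi mu mu' ps1 Hgold m'0 m'm mps.
have Hmo : forall k, tau k.+1 <= tau k.
  by move=> k; case: (Hit k) => _ _ Ht _ _; have [h1 _ _] := @min3_le _ _ _ _ _ Ht; rewrite -lee_fin.
have [C C0 HC] := opnorm K.
set C1 := Num.sqrt C.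
have C10 : 0 < C1 by rewrite /C1 sqrtr_gt0.
set L1 := `|Lbar| + 1.
have L10 : 0 < L1 by rewrite /L1 ltr_pwDr.
have sb0 : 0 < Num.sqrt beta by rewrite sqrtr_gt0.
set tmin := Num.min (tau 0%N) (Num.min (mu / (Num.sqrt beta * C1)) (mu' / L1)).
have tmin0 : 0 < tmin.
  rewrite /tmin !lt_min t0 /=; apply/andP; split; apply: divr_gt0 => //; exact: mulr_gt0.
have Hlb : forall k, tmin <= tau k.
  elim=> [|k IH]; first by rewrite /tmin ge_min lexx.
  case: (Hit k) => _ _ Ht _ _.
  rewrite -lee_fin Ht !le_min; apply/andP; split; first by rewrite lee_fin.
  apply/andP; split.
  - apply: (@le_trans _ _ ((mu / (Num.sqrt beta * C1))%:E)).
      by rewrite lee_fin /tmin ge_min; apply/orP; right; rewrite ge_min lexx.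
    apply: qratio_ge => //.
    + exact: mulr_gt0.
    + by apply: mulr_ge0; [exact: ltW | exact: enorm_ge0].
    + rewrite -mulrA; apply: ler_wpM2l; first exact: ltW.
      rewrite -mulmxBl; apply: enormK_le => //; exact: ltW.
  - apply: (@le_trans _ _ ((mu' / L1)%:E)).
      by rewrite lee_fin /tmin ge_min; apply/orP; right; rewrite ge_min lexx orbT.
    apply: qratio_ge => //.
    + exact: enorm_ge0.
    + apply: le_trans (Hlip _ _) _; apply: ler_wpM2r; first exact: enorm_ge0.
      by rewrite /L1; have := ler_norm Lbar; clear; lra.
have Htpos : forall k, 0 < tau k by move=> k; apply: lt_le_trans tmin0 (Hlb k).
have Sq1 : forall k, tau k.+1 ^+ 2 * beta * dotv (x k.+1 *m K - x k *m K) (x k.+1 *m K - x k *m K)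
    <= mu ^+ 2 * dotv (x k.+1 - x k) (x k.+1 - x k).
  move=> k; case: (Hit k) => _ _ Ht _ _; have [_ hq _] := @min3_le _ _ _ _ _ Ht.
  have := @qratio_sq _ _ _ _ (ltW (Htpos k.+1)) _ _ hq.
  rewrite !exprMn sqr_sqrtr ?(ltW b0) // !enorm2 mulrA; apply.
  - by apply: mulr_ge0; [exact: ltW | exact: enorm_ge0].
  - by apply: mulr_ge0; [exact: sqrtr_ge0 | exact: enorm_ge0].
have Sq2 : forall k, tau k.+1 ^+ 2 * dotv (gh (x k.+1) - gh (x k)) (gh (x k.+1) - gh (x k))
    <= mu' ^+ 2 * dotv (x k.+1 - x k) (x k.+1 - x k).
  move=> k; case: (Hit k) => _ _ Ht _ _; have [_ _ hq] := @min3_le _ _ _ _ _ Ht.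
  have := @qratio_sq _ _ _ _ (ltW (Htpos k.+1)) _ _ hq.
  rewrite !exprMn !enorm2; apply.
  - by apply: mulr_ge0; [exact: ltW | exact: enorm_ge0].
  - exact: enorm_ge0.
have [N0 HN0] := @ratio_ev _ tau tmin eps tmin0 e0 Hlb Hmo.
set ia := psi / (psi - 1).
set bi := beta^-1.
pose En j := ia * dotv (z j.+2 - xb) (z j.+2 - xb) + bi * dotv (y j - yb) (y j - yb)
   + mu' * dotv (x j.+1 - x j) (x j.+1 - x j).
have Hstep : forall j, (N0 <= j)%N ->
  ia * dotv (z j.+3 - xb) (z j.+3 - xb) + bi * dotv (y j.+1 - yb) (y j.+1 - yb)
    + mu' * dotv (x j.+2 - x j.+1) (x j.+2 - x j.+1)
    + dl * dotv (x j.+2 - x j.+1) (x j.+2 - x j.+1) + psi / 2 * dotv (z j.+2 - x j.+1) (z j.+2 - x j.+1)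
    + tau j.+1 * gam_g * dotv (y j.+1 - yb) (y j.+1 - yb)
    + tau j.+1 * gam_h * dotv (x j.+1 - xb) (x j.+1 - xb) <= En j.
  move=> j Hj.
  case: (Hit j) => _ HpB _ Hpd Hy0.
  case: (Hit j.+1) => Hz1 HpA _ _ _.
  case: (Hit j.+2) => Hz2 _ _ _ _.
  exact: (@main_step _ _ _ f g K h gh gam_g gam_h beta psi mu mu' eps dl xb (x j) (x j.+1) (x j.+2)
    (z j.+1) (z j.+2) (z j.+3) yb (y j) (y j.+1) (w j.+1) (tau j) (tau j.+1) (tau j.+2) Hfp Hfc Hgp Hgc Hgsc Hhsc Hsad b0 ps1 Hgold mu'0 (Htpos j) (Htpos j.+1)
    (Htpos j.+2) (Hmo j) (HN0 j Hj) (HN0 j.+1 (leqW Hj)) (ltW e0) e1 Hdl Hz1 Hz2 HpB HpA Hpd Hy0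
    (Sq2 j) (Sq1 j.+1)).
have ia0 : 0 < ia by rewrite /ia; apply: divr_gt0; clear -ps1; lra.
have bi0 : 0 < bi by rewrite /bi invr_gt0.
set m0 := Num.min dl (Num.min (psi / 2) (tmin * gam_h)).
have m00 : 0 < m0.
  rewrite /m0 !lt_min dl0 /=; apply/andP; split; last exact: mulr_gt0.
  by clear -ps1; lra.
have d0 : 0 < 3 * ia + mu' by clear -ia0 mu'0; lra.
set c := Num.min (m0 / (3 * ia + mu')) (tmin * gam_g * beta).
have c0 : 0 < c.
  rewrite /c lt_min; apply/andP; split; first exact: divr_gt0.
  by apply: mulr_gt0 => //; apply: mulr_gt0.
have Hcon : forall j, (N0 <= j)%N -> (1 + c) * En j.+1 <= En j.
  move=> j Hj; have MS := Hstep j Hj.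
  case: (Hit j.+2) => Hz2 _ _ _ _.
  move: MS; set E0 := En j => MS; rewrite /En.
  apply: (@contract_step _ ia bi mu' dl psi (tau j.+1) tmin gam_g gam_h c m0
    (dotv (z j.+3 - xb) (z j.+3 - xb)) (dotv (y j.+1 - yb) (y j.+1 - yb))
    (dotv (x j.+2 - x j.+1) (x j.+2 - x j.+1)) (dotv (z j.+2 - x j.+1) (z j.+2 - x j.+1))
    (dotv (x j.+1 - xb) (x j.+1 - xb)) E0); last exact: MS.
  all: rewrite ?dotv_ge0 //.
  - exact: ltW.
  - exact: ltW.
  - exact: ltW.
  - exact: ltW.
  - by rewrite -ler_pdivlMr // /c ge_min lexx.
  - have : c <= tmin * gam_g * beta by rewrite /c ge_min lexx orbT.
    rewrite /bi -ler_pdivlMr ?invr_gt0 // invrK //.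
  - by rewrite /m0 ge_min lexx.
  - by rewrite /m0 ge_min; apply/orP; right; rewrite ge_min lexx.
  - by rewrite /m0 ge_min; apply/orP; right; rewrite ge_min lexx orbT.
  - exact: z_bound ps1 Hz2.
set th := (1 + c)^-1.
have th0 : 0 < th by rewrite /th invr_gt0; clear -c0; lra.
have th1 : th < 1 by rewrite /th invf_lt1; clear -c0; lra.
have Hdec : forall j, (N0 <= j)%N -> En j.+1 <= th * En j.
  move=> j Hj; have c1 : 0 < 1 + c by clear -c0; lra.
  by rewrite -(ler_pM2l c1) /th mulrA mulfV ?gt_eqF // mul1r; apply: Hcon.
have Hgeo := @geo_decay _ En th N0 th0 Hdec.
set A := En N0 / th ^+ N0.
have En0 : forall j, 0 <= En j.
  move=> j; rewrite /En.
  have h1 : 0 <= ia * dotv (z j.+2 - xb) (z j.+2 - xb) by apply: mulr_ge0; [exact: ltW | exact: dotv_ge0].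
  have h2 : 0 <= bi * dotv (y j - yb) (y j - yb) by apply: mulr_ge0; [exact: ltW | exact: dotv_ge0].
  have h3 : 0 <= mu' * dotv (x j.+1 - x j) (x j.+1 - x j) by apply: mulr_ge0; [exact: ltW | exact: dotv_ge0].
  by rewrite !addr_ge0.
have A0 : 0 <= A by rewrite /A; apply: divr_ge0 => //; apply: exprn_ge0; exact: ltW.
have Eparts : forall k, [/\ ia * dotv (z k.+2 - xb) (z k.+2 - xb) <= En k,
    bi * dotv (y k - yb) (y k - yb) <= En k &
    mu' * dotv (x k.+1 - x k) (x k.+1 - x k) <= En k].
  move=> k; rewrite /En.
  have h1 : 0 <= ia * dotv (z k.+2 - xb) (z k.+2 - xb) by apply: mulr_ge0; [exact: ltW | exact: dotv_ge0].
  have h2 : 0 <= bi * dotv (y k - yb) (y k - yb) by apply: mulr_ge0; [exact: ltW | exact: dotv_ge0].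
  have h3 : 0 <= mu' * dotv (x k.+1 - x k) (x k.+1 - x k) by apply: mulr_ge0; [exact: ltW | exact: dotv_ge0].
  by split; clear -h1 h2 h3; lra.
have pos1 : forall p : R, 0 < p -> 0 < p^-1 * A + 1.
  move=> p p0; apply: ltr_wpDl; last exact: ltr01.
  by apply: mulr_ge0 => //; rewrite invr_ge0 ltW.
have thk0 : forall k, 0 <= th ^+ k by move=> k; apply: exprn_ge0; exact: ltW.
split.
  exists (bi^-1 * A + 1), (mu'^-1 * A + 1), (ia^-1 * A + 1), th, N0.
  split; [exact: pos1 | exact: pos1 | exact: pos1 | by rewrite th0 th1 |].
  move=> k Hk; have Ek := Hgeo k Hk; have [p1 p2 p3] := Eparts k.
  split.
  - by rewrite enorm2 nsq_sym; exact: (@bound_term _ _ _ _ _ _ ia0 A0 (thk0 k) p1 Ek).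
  - by rewrite enorm2 nsq_sym; exact: (@bound_term _ _ _ _ _ _ bi0 A0 (thk0 k) p2 Ek).
  - by rewrite enorm2 nsq_sym; exact: (@bound_term _ _ _ _ _ _ mu'0 A0 (thk0 k) p3 Ek).
set B := (tmin * gam_h)^-1 * A * th^-1 + beta * A.
have B0 : 0 <= B.
  have tg0 : 0 <= (tmin * gam_h)^-1 by rewrite invr_ge0; apply: ltW; apply: mulr_gt0.
  have ti0 : 0 <= th^-1 by rewrite invr_ge0 ltW.
  rewrite /B; apply: addr_ge0; last by apply: mulr_ge0 => //; exact: ltW.
  by apply: mulr_ge0 => //; apply: mulr_ge0.
exists (Num.sqrt B + 1); first by apply: ltr_wpDl; [exact: sqrtr_ge0 | exact: ltr01].
exists (fun k => Num.sqrt (th ^+ k)); split.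
  exists (Num.sqrt th).
    by rewrite sqrtr_gt0 th0 /= -sqrtr1 ltr_sqrt // ltr01.
  exists 0%N => k _.
  rewrite !ger0_norm ?sqrtr_ge0 // exprS sqrtrM //; exact: ltW.
exists N0.+1 => k Hk.
case: k Hk => [//|j] Hj.
have Hj' : (N0 <= j)%N by [].
have MS := Hstep j Hj'.
have Ej := Hgeo j Hj'.
have Ej1 := Hgeo j.+1 (leqW Hj').
have [_ p2 _] := Eparts j.+1.
have X0 := dotv_ge0 (x j.+1 - xb).
have Y0 := dotv_ge0 (y j.+1 - yb).
have hX : tmin * gam_h * dotv (x j.+1 - xb) (x j.+1 - xb) <= A * th ^+ j.
  apply: le_trans Ej; apply: le_trans MS.
  have q1 : tmin * gam_h * dotv (x j.+1 - xb) (x j.+1 - xb)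
     <= tau j.+1 * gam_h * dotv (x j.+1 - xb) (x j.+1 - xb).
    by apply: ler_wpM2r => //; apply: ler_wpM2r; [exact: ltW | exact: Hlb].
  have r1 : 0 <= ia * dotv (z j.+3 - xb) (z j.+3 - xb) by apply: mulr_ge0; [exact: ltW | exact: dotv_ge0].
  have r2 : 0 <= bi * dotv (y j.+1 - yb) (y j.+1 - yb) by apply: mulr_ge0; [exact: ltW | exact: dotv_ge0].
  have r3 : 0 <= mu' * dotv (x j.+2 - x j.+1) (x j.+2 - x j.+1) by apply: mulr_ge0; [exact: ltW | exact: dotv_ge0].
  have r4 : 0 <= dl * dotv (x j.+2 - x j.+1) (x j.+2 - x j.+1) by apply: mulr_ge0; [exact: ltW | exact: dotv_ge0].
  have r5 : 0 <= psi / 2 * dotv (z j.+2 - x j.+1) (z j.+2 - x j.+1).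
    by apply: mulr_ge0; [apply: divr_ge0; [apply: ltW; apply: lt_trans ps1|] | exact: dotv_ge0].
  have r6 : 0 <= tau j.+1 * gam_g * dotv (y j.+1 - yb) (y j.+1 - yb).
    by apply: mulr_ge0; [apply: mulr_ge0; apply: ltW | exact: dotv_ge0].
  by clear -q1 r1 r2 r3 r4 r5 r6; lra.
have hY : dotv (y j.+1 - yb) (y j.+1 - yb) <= beta * (A * th ^+ j.+1).
  have H := le_trans p2 Ej1.
  have -> : dotv (y j.+1 - yb) (y j.+1 - yb) = beta * (bi * dotv (y j.+1 - yb) (y j.+1 - yb)).
    by rewrite /bi mulrA mulfV ?gt_eqF // mul1r.
  by apply: ler_wpM2l => //; exact: ltW.
have hX' : dotv (x j.+1 - xb) (x j.+1 - xb) <= (tmin * gam_h)^-1 * A * th^-1 * th ^+ j.+1.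
  have tg0 : 0 < tmin * gam_h by apply: mulr_gt0.
  have -> : (tmin * gam_h)^-1 * A * th^-1 * th ^+ j.+1 = (tmin * gam_h)^-1 * (A * th ^+ j).
    by rewrite exprS; field; rewrite !gt_eqF.
  by rewrite ler_pdivlMl.
rewrite !enorm2.
have hS : dotv (x j.+1 - xb) (x j.+1 - xb) + dotv (y j.+1 - yb) (y j.+1 - yb) <= B * th ^+ j.+1.
  by rewrite /B mulrDl; apply: lerD => //; rewrite -mulrA.
have Bt : 0 <= B * th ^+ j.+1 by apply: mulr_ge0.
apply: le_trans (_ : Num.sqrt (B * th ^+ j.+1) <= _).
  by rewrite ler_sqrt.
rewrite sqrtrM // ler_wpM2r ?sqrtr_ge0 //.
by rewrite lerDl.
Qed.
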